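(* Let $\omega$ be a nonempty word in $\mathcal{B}$, let $n\ge1$, and let $\pi\in X_n(\omega)$ have $\omega$-decomposition $(\alpha,\omega,\gamma,\delta)$. If $\delta\notin\mathcal{B}$, then $\gamma_{-1}>\delta_1$ and $h(\omega)\ne 1$.
   Context: For a word $w=w_1\cdots w_k$ of pairwise distinct positive integers, an ascent is an index $t$ with $w_t<w_{t+1}$, a descent one with $w_t>w_{t+1}$, and the height is $h(w)=(\#\text{ascents})-(\#\text{descents})$ ($h(w)=0$ if $k\le1$). The word is ballot if every prefix has nonnegative height. $\mathcal{B}$ denotes the set of all finite ballot words of pairwise distinct positive integers (including the empty word). A ballot permutation of $[n]$ is a permutation $\pi_1\cdots\pi_n$ in one-line notation that is a ballot word. For a word $w$, $w_1$ is its first letter, $w_{-1}$ its last letter, and $w'=w_k\cdots w_1$ its reversal. For a nonempty $\omega\in\mathcal{B}$, $X_n(\omega)$ is the set of ballot permutations $\pi$ of $[n]$ that can be written as a concatenation $\pi=\alpha\omega\gamma\delta$ (with $\alpha,\gamma,\delta$ possibly empty) such that $h(\alpha\omega\gamma)=h(\omega)$. For $\pi\in X_n(\omega)$, its $\omega$-decomposition is the (unique) 4-tuple $(\alpha,\omega,\gamma,\delta)$ with $\pi=\alpha\omega\gamma\delta$, $h(\alpha\omega\gamma)=h(\omega)$ and $\gamma'\omega_{-1}\in\mathcal{B}$, where $\gamma$ is of maximal length among all words with these properties. If $\gamma$ is empty, one sets $\gamma_{-1}=\omega_{-1}$. *)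

(* Defs.v *)
From mathcomp Require Import all_boot all_order all_algebra.
Set Implicit Arguments. Unset Strict Implicit. Unset Printing Implicit Defensive.
Import Order.TTheory GRing.Theory Num.Theory.

(* Words are [seq nat]; letters are meant to be pairwise distinct positive integers. *)

Definition step (p : nat * nat) : int :=
  ((p.1 < p.2)%N%:Z - (p.2 < p.1)%N%:Z)%R.

Definition height (w : seq nat) : int :=
  (\sum_(p <- zip w (behead w)) step p)%R.

Definition ballot (w : seq nat) : bool :=
  all (fun i => (0 <= height (take i w))%R) (iota 0 (size w).+1).

Definition inB (w : seq nat) : bool :=
  [&& uniq w, all (fun x => 0 < x)%N w & ballot w].

Definition ballot_perm (n : nat) (pi : seq nat) : bool :=
  perm_eq pi (iota 1 n) && ballot pi.

Definition in_X (n : nat) (omega pi : seq nat) : Prop :=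
  ballot_perm n pi /\
  exists alpha gamma delta,
    pi = alpha ++ omega ++ gamma ++ delta /\
    height (alpha ++ omega ++ gamma) = height omega.

(* w_{-1}: last letter (default 0 for the empty word, never used on empty words) *)
Definition lastl (w : seq nat) : nat := last 0 w.

Definition decomp_cond (pi omega alpha gamma delta : seq nat) : Prop :=
  pi = alpha ++ omega ++ gamma ++ delta /\
  height (alpha ++ omega ++ gamma) = height omega /\
  inB (rev gamma ++ [:: lastl omega]).

Definition omega_decomp (pi omega alpha gamma delta : seq nat) : Prop :=
  decomp_cond pi omega alpha gamma delta /\
  forall alpha2 gamma2 delta2,
    decomp_cond pi omega alpha2 gamma2 delta2 -> (size gamma2 <= size gamma)%N.

(* Main.v *)
Require Import Defs.
From mathcomp Require Import all_boot all_order all_algebra zify.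
Import Order.TTheory GRing.Theory Num.Theory.

Section Helpers.
Local Open Scope ring_scope.
Lemma step_bound p : -1 <= step p <= 1.
Proof. rewrite /step; case: (_ < _)%N; case: (_ < _)%N; by []. Qed.

Lemma stepN a b : step (b, a) = - step (a, b).
Proof. by rewrite /step /= opprB. Qed.

Lemma height_cons2 a b r : height (a :: b :: r) = step (a, b) + height (b :: r).
Proof. by rewrite /height /= big_cons. Qed.

Lemma height1 a : height [:: a] = 0.
Proof. by rewrite /height /= big_nil. Qed.

Lemma height0 : height [::] = 0.
Proof. by rewrite /height /= big_nil. Qed.

Lemma heightH a s t : height (a :: s ++ t) = height (a :: s) + height (last a s :: t).
Proof.
elim: s a => [|b s IH] a /=; first by rewrite height1 add0r.
by rewrite !height_cons2 IH addrA.
Qed.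

Lemma heightC s y t : height (s ++ y :: t) = height (rcons s y) + height (y :: t).
Proof.
case: s => [|x s] /=; first by rewrite height1 add0r.
by rewrite -cat_rcons heightH last_rcons.
Qed.

Lemma height_rcons2 s b a : height (rcons (rcons s b) a) = height (rcons s b) + step (b, a).
Proof.
case: s => [|x s] /=; first by rewrite height_cons2 !height1 addr0 add0r.
by rewrite -(cats1 (rcons s b)) heightH last_rcons height_cons2 height1 addr0.
Qed.

Lemma height_rev s : height (rev s) = - height s.
Proof.
elim: s => [|a s IH]; first by rewrite /= height0 oppr0.
rewrite rev_cons; case: s IH => [|b s] IH.
  by rewrite /= !height1 oppr0.
rewrite rev_cons height_rcons2 -rev_cons IH height_cons2 stepN [RHS]opprD.
by rewrite addrC.
Qed.

Lemma height_catD s t :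
  height s + height t - 1 <= height (s ++ t) <= height s + height t + 1.
Proof.
case/lastP: s => [|s x]; first by rewrite /= height0 add0r; lia.
case: t => [|y t]; first by rewrite cats0 height0 addr0; lia.
rewrite cat_rcons heightC height_cons2.
have := step_bound (x, y); lia.
Qed.

Lemma height_small s : (size s <= 1)%N -> height s = 0.
Proof. by case: s => [|a [|b s]] //= _; rewrite ?height0 ?height1. Qed.

Lemma heightJ s x t y r :
  height (s ++ x :: t ++ y :: r) = height (s ++ x :: t) + step (last x t, y) + height (y :: r).
Proof.
rewrite -[x :: t ++ y :: r]/((x :: t) ++ y :: r) catA heightC.
by rewrite (lastI x t) -!rcons_cat height_rcons2.
Qed.

Lemma ballotP w : reflect (forall i, 0 <= height (take i w)) (ballot w).
Proof.
apply: (iffP allP) => H i; last by move=> _; apply: H.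
case: (leqP i (size w)) => hi.
  by apply: H; rewrite mem_iota /= add0n ltnS.
by rewrite take_oversize ?(ltnW hi) // -{1}(take_size w); apply: H; rewrite mem_iota /=.
Qed.

Lemma ballot_revP w : reflect (forall k, height (drop k w) <= 0) (ballot (rev w)).
Proof.
apply: (iffP (ballotP _)) => H k.
  case: (leqP k (size w)) => hk.
    by have := H (size w - k)%N; rewrite take_rev subKn // height_rev oppr_ge0.
  by rewrite drop_oversize ?(ltnW hk) // height0.
by rewrite take_rev height_rev oppr_ge0.
Qed.
End Helpers.

Lemma inB_nil : inB [::].
Proof. by rewrite /inB /ballot /= height0. Qed.

Theorem lemma2p2 (omega : seq nat) (n : nat) (pi alpha gamma delta : seq nat) :
  omega != [::] -> inB omega -> (1 <= n)%N ->
  in_X n omega pi ->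
  omega_decomp pi omega alpha gamma delta ->
  ~~ inB delta ->
  (last (lastl omega) gamma > head 0 delta)%N /\ height omega != 1%R.
Proof.
move=> ne_om inBom n1 [/andP[perm_pi bal_pi] _] [[Hpi [Hh HB]] Hmax] nB.
have upi : uniq pi by rewrite (perm_uniq perm_pi) iota_uniq.
have ppi : forall x, x \in pi -> (0 < x)%N.
  by move=> x; rewrite (perm_mem perm_pi) mem_iota => /andP[].
case: omega ne_om inBom Hpi Hh HB Hmax => [//|x s0] _ _ Hpi Hh HB Hmax.
set c0 := lastl (x :: s0).
have c0E : c0 = last x s0 by [].
set A := alpha ++ belast x s0.
have Epi : pi = A ++ c0 :: gamma ++ delta.
  by rewrite Hpi /A c0E (lastI x s0) -cats1 -!catA.
have EA : forall t, alpha ++ (x :: s0) ++ t = A ++ c0 :: t.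
  by move=> t; rewrite /A c0E (lastI x s0) -cats1 -!catA.
have Eh : height (A ++ c0 :: gamma) = height (x :: s0) by rewrite -EA.
have HBr : ballot (rev (c0 :: gamma)).
  by move: HB; rewrite rev_cons -cats1 /inB => /and3P[].
case: delta Hpi Epi Hmax nB => [|d1 D0] Hpi Epi Hmax nB.
  by rewrite inB_nil in nB.
set delta := d1 :: D0 in Hpi Epi Hmax nB *.
have udel : uniq delta.
  by move: upi; rewrite Epi -[c0 :: gamma ++ _]/((c0 :: gamma) ++ delta) catA cat_uniq => /and3P[].
have nbal : ~~ ballot delta.
  move: nB; apply: contra => bd; rewrite /inB udel bd andbT.
  by apply/allP => y hy; apply: ppi; rewrite Epi mem_cat in_cons !mem_cat hy !orbT.
have exP : exists j, (height (take j delta) < 0)%R.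
  by have [i _ Hi] := allPn nbal; exists i; rewrite ltNge.
case: (ex_minnP exP) => j Hj jmin.
have Hlt : forall i, (i < j)%N -> (0 <= height (take i delta))%R.
  move=> i ij; rewrite leNgt; apply/negP => /jmin; rewrite leqNgt ij //.
case: j Hj jmin Hlt => [|j'] Hj jmin Hlt.
  by rewrite take0 height0 in Hj.
have Hj1 : height (take j'.+1 delta) = (-1)%R.
  have := height_catD (take j' delta) (take 1 (drop j' delta)).
  rewrite -takeD addn1 (height_small (take 1 _)) ?size_take_min ?geq_minl //.
  have := Hlt j' (ltnSn j'); lia.
set D' := take j' D0.
have DE : take j'.+1 delta = d1 :: D' by [].
have HD : height (d1 :: D') = (-1)%R by rewrite -DE.
set c := last c0 gamma.
have cd : c != d1.
  apply/eqP => e; move: upi; rewrite Epi cat_uniq => /and3P[_ _].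
  rewrite -[c0 :: gamma ++ _]/((c0 :: gamma) ++ delta) cat_uniq => /and3P[_ /negP H _].
  by apply: H; rewrite /= -e /c mem_last.
have HJ : height (A ++ c0 :: gamma ++ d1 :: D') = (height (x :: s0) + step (c, d1) + (-1))%R.
  by rewrite heightJ Eh HD.
have c1 : (d1 < c)%N.
  rewrite ltnNge; apply/negP => cled.
  have cd1 : (c < d1)%N by rewrite ltn_neqAle cd cled.
  have st1 : step (c, d1) = 1%R.
    rewrite /step /= cd1; have -> : (d1 < c)%N = false by apply/negbTE; rewrite -leqNgt ltnW.
    by [].
  have := Hmax alpha (gamma ++ d1 :: D') (drop j'.+1 delta).
  rewrite size_cat /= => H.
  suff : (size gamma + (size D').+1 <= size gamma)%N by lia.
  apply: H; split.
    by rewrite Hpi -catA -DE cat_take_drop.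
  split.
    by rewrite EA HJ st1; lia.
  have Epi' : pi = A ++ (c0 :: gamma ++ d1 :: D') ++ drop j'.+1 delta.
    by rewrite Epi; congr (_ ++ _); rewrite /= -catA -DE cat_take_drop.
  rewrite -/c0 cats1 -rev_cons /inB rev_uniq.
  apply/and3P; split.
  - by move: upi; rewrite Epi' !cat_uniq => /and3P[_ _ /and3P[]].
  - apply/allP => y; rewrite mem_rev => hy; apply: ppi.
    by rewrite Epi' !mem_cat hy orbT.
  apply/ballot_revP => k.
  case: (ltnP k (size (c0 :: gamma))) => hk.
    rewrite -[c0 :: gamma ++ _]/((c0 :: gamma) ++ d1 :: D') drop_cat hk.
    have := (elimT (ballot_revP _) HBr) k.
    case E: (drop k (c0 :: gamma)) => [|e r].
      by move: hk; rewrite -subn_gt0 -size_drop E.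
    have le : last e r = c.
      by rewrite /c -[last c0 gamma]/(last 0 (c0 :: gamma)) -(cat_take_drop k (c0 :: gamma)) E last_cat.
    rewrite /= heightH le height_cons2 st1 HD; lia.
  rewrite -[c0 :: gamma ++ _]/((c0 :: gamma) ++ d1 :: D') drop_cat ltnNge hk /=.
  move: (k - (size gamma).+1)%N => i.
  rewrite -DE.
  case: (ltnP i (size (take j'.+1 delta))) => hi; last first.
    by rewrite drop_oversize // height0.
  have := height_catD (take i (take j'.+1 delta)) (drop i (take j'.+1 delta)).
  rewrite cat_take_drop take_takel; last first.
    by apply: ltnW; apply: (leq_trans hi); rewrite size_take_min geq_minl.
  have : (i < j'.+1)%N by apply: (leq_trans hi); rewrite size_take_min geq_minl.
  move/Hlt; rewrite Hj1; lia.
split; first by [].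
apply/eqP => h1.
move/ballotP: bal_pi => /(_ (size (A ++ c0 :: gamma) + j'.+1)%N).
rewrite Epi -[c0 :: gamma ++ _]/((c0 :: gamma) ++ delta) catA takeD take_size_cat //.
rewrite drop_size_cat // DE -catA /= HJ h1.
have : step (c, d1) = (-1)%R.
  rewrite /step /= c1; have -> : (c < d1)%N = false by apply/negbTE; rewrite -leqNgt ltnW.
  by [].
move=> ->; lia.
Qed.
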